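(* Let $n\geq 2$. Then $T\cap S_{n-1}=\{\mathrm{id}\}$, and for every $2\leq i\leq n$, $$T\cap \big(S_{n-1}(1,i)\big)=\{C_{m_1}\cdots C_{m_{i-1}}\ |\ 2\leq m_1<\dots<m_{i-1}\leq n\}.$$
   Context: Permutations in $S_n$ are composed right-to-left: $(\sigma\tau)(k)=\sigma(\tau(k))$. $S_{n-1}\subset S_n$ denotes the subgroup of permutations $\tau$ with $\tau(1)=1$, and $S_{n-1}(1,i)=\{\tau\cdot(1,i):\tau\in S_{n-1}\}$, where $(1,i)$ is a transposition. For $m\geq 2$, $C_m$ denotes the cyclic permutation $(1,m,m-1,\dots,2)$ (i.e. $1\mapsto m\mapsto m-1\mapsto\dots\mapsto 2\mapsto 1$). $T\subset S_n$ is defined as $T:=\{\mathrm{id}\}\cup\bigcup_{i=1}^{n-1}\{C_{m_1}\cdots C_{m_i}\ |\ 2\leq m_1<\dots<m_i\leq n\}$. *)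

(* Defs.v *)
(* Permutations of {1,...,n} are modelled as {perm 'I_n},
   with the paper's point k (1 <= k <= n) represented by the ordinal of value k-1. *)
From mathcomp Require Import all_boot all_fingroup.
From mathcomp Require Import zify.
Set Implicit Arguments. Unset Strict Implicit. Unset Printing Implicit Defensive.

(* Paper's product (right-to-left composition): (pmul s t) x = s (t x).
   Note that MathComp's group law is (t * s) x = s (t x). *)
Definition pmul n (s t : {perm 'I_n}) : {perm 'I_n} := (t * s)%g.

(* The cycle C_m = (1, m, m-1, ..., 2) on 0-based values:
   0 |-> m-1, j |-> j-1 for 1 <= j <= m-1, other points fixed.
   (Only meaningful for 2 <= m <= n; identity otherwise.) *)
Definition cycv (n m i : nat) : nat :=
  if (1 < m) && (m <= n) then
    (if i == 0 then m.-1 else if i < m then i.-1 else i)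
  else i.

Lemma cycv_lt n m (i : 'I_n) : cycv n m i < n.
Proof. have := ltn_ord i; rewrite /cycv; repeat (case: ifP => ?); lia. Qed.

Lemma cycv_inj n m : injective (fun i : 'I_n => Ordinal (cycv_lt m i)).
Proof.
move=> i j /(congr1 val) /=; rewrite /cycv => h; apply: val_inj => /=.
have := ltn_ord i; have := ltn_ord j; move: h; repeat (case: ifP => ?); lia.
Qed.

Definition C n m : {perm 'I_n} := perm (@cycv_inj n m).

(* The transposition (1, k), i.e. swapping the 0-based values 0 and k-1
   (only meaningful for 2 <= k <= n; identity otherwise). *)
Definition trv (n k i : nat) : nat :=
  if (1 < k) && (k <= n) then
    (if i == 0 then k.-1 else if i == k.-1 then 0 else i)
  else i.

Lemma trv_lt n k (i : 'I_n) : trv n k i < n.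
Proof. have := ltn_ord i; rewrite /trv; repeat (case: ifP => ?); lia. Qed.

Lemma trv_inj n k : injective (fun i : 'I_n => Ordinal (trv_lt k i)).
Proof.
move=> i j /(congr1 val) /=; rewrite /trv => h; apply: val_inj => /=.
have := ltn_ord i; have := ltn_ord j; move: h; repeat (case: ifP => ?); lia.
Qed.

Definition transp1 n k : {perm 'I_n} := perm (@trv_inj n k).

Definition inS1 n (s : {perm 'I_n}) : Prop :=
  forall x : 'I_n, val x = 0 -> val (s x) = 0.

Definition inCoset n k (s : {perm 'I_n}) : Prop :=
  exists tau, inS1 tau /\ s = pmul tau (transp1 n k).

Definition prodC n (ms : seq nat) : {perm 'I_n} :=
  foldr (fun m acc => pmul (C n m) acc) 1%g ms.

Definition incr_seq n j (ms : seq nat) : Prop :=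
  [/\ size ms = j, sorted ltn ms & all (fun m => (1 < m) && (m <= n)) ms].

Definition inT n (s : {perm 'I_n}) : Prop :=
  s = 1%g \/
  exists j ms, [/\ 1 <= j <= n.-1, incr_seq n j ms & s = prodC n ms].

(* Main.v *)
Require Import Defs.
From mathcomp Require Import all_boot all_fingroup.
From mathcomp Require Import zify.

Lemma prodC_cons n m ms x : prodC n (m :: ms) x = C n m (prodC n ms x).
Proof. by rewrite /prodC /= /pmul permM. Qed.

Lemma C_val n m x : val (C n m x) = cycv n m x.
Proof. by rewrite /C permE. Qed.

Lemma tr_val n k x : val (transp1 n k x) = trv n k x.
Proof. by rewrite /transp1 permE. Qed.

Lemma key_gen n ms : forall a (x : 'I_n), path ltn a.+1 ms ->
  all (fun m => m <= n) ms -> val x = a + size ms -> val (prodC n ms x) = a.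
Proof.
elim: ms => [|m ms IH] a x /= hp ha hx.
  by rewrite /prodC /= perm1 hx addn0.
move/andP: hp => [ham hp]; move/andP: ha => [hmn ha].
have hp' : path ltn a.+2 ms.
  case: ms hp {IH ha hx} => [|y ms] //= /andP [hy ->]; rewrite andbT; lia.
have hx' : val x = a.+1 + size ms by move: hx => /= ->; lia.
rewrite prodC_cons C_val (IH a.+1 x hp' ha hx') /cycv.
have -> : (1 < m) && (m <= n) by apply/andP; split; lia.
by rewrite /= ham.
Qed.

Lemma key n j ms (x : 'I_n) : incr_seq n j ms -> val x = j -> val (prodC n ms x) = 0.
Proof.
move=> [hs hso ha] hx; apply: key_gen.
- case: ms hso ha {hs} => [|m ms] //= h /andP [/andP [h1 _] _]; rewrite h1; exact: h.
- by apply/allP => m /(allP ha) /andP [].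
- by rewrite hx hs.
Qed.

Lemma tr_invol n k : (transp1 n k * transp1 n k)%g = 1%g.
Proof.
apply/permP => x; apply: val_inj; rewrite permM perm1 !tr_val /trv.
have := ltn_ord x.
case: ifP => hc; last by move=> _; rewrite hc.
move: hc => /andP [h1 h2] hx; rewrite h1 h2 /=.
case: (@eqP _ (nat_of_ord x) 0) => e0 /=; case: (@eqP _ (nat_of_ord x) k.-1) => e1 /=;
  by repeat (case: ifP => /eqP ?); lia.
Qed.

Theorem lemma3p3 (n : nat) (hn : 2 <= n) :
  (forall s : {perm 'I_n}, (inT s /\ inS1 s) <-> s = 1%g) /\
  (forall i : nat, 2 <= i <= n ->
     forall s : {perm 'I_n},
       (inT s /\ inCoset i s) <->
       (exists ms, incr_seq n i.-1 ms /\ s = prodC n ms)).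
Proof.
split.
  move=> s; split.
    move=> [[//|[j [ms [hj inc hs]]]] h1].
    have h0 : 0 < n by lia.
    have hjn : j < n by lia.
    have e0 := h1 (Ordinal h0) erefl.
    have ej := @key n j ms (Ordinal hjn) inc erefl.
    rewrite hs in e0.
    have : Ordinal h0 = Ordinal hjn.
      apply: (@perm_inj _ (prodC n ms)); apply: val_inj; by rewrite e0 ej.
    move/(congr1 val) => /=; lia.
  move=> ->; split; first by left.
  by move=> x hx; rewrite perm1.
move=> i hi s; split.
  move=> [hT [tau [htau hs]]].
  have hin : i.-1 < n by lia.
  have e1 : val (s (Ordinal hin)) = 0.
    rewrite hs /pmul permM; apply: htau; rewrite tr_val /trv /=.
    case: ifP => h; last lia.
    case: ifP => h2; first lia. by rewrite eqxx.
  case: hT => [hs1|[j [ms [hj inc hs2]]]].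
    by move: e1; rewrite hs1 perm1 /=; lia.
  have hjn : j < n by lia.
  have ej := @key n j ms (Ordinal hjn) inc erefl.
  rewrite hs2 in e1.
  have : Ordinal hin = Ordinal hjn.
    apply: (@perm_inj _ (prodC n ms)); apply: val_inj; by rewrite e1 ej.
  move/(congr1 val) => /= ej'.
  exists ms; split => //; by rewrite ej'.
move=> [ms [inc ->]]; split.
  right; exists i.-1, ms; split => //; lia.
exists (pmul (prodC n ms) (transp1 n i)); split.
  move=> x hx; rewrite /pmul permM; apply: (@key n i.-1 ms _ inc).
  rewrite tr_val /trv hx /=.
  case: ifP => h; last lia. done.
by rewrite /pmul mulgA tr_invol mul1g.
Qed.
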